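(* Let $N\ge 2$ and let $(\nu_r^{(1:N)})_{r\ge1}$ be vectors of non-negative integers with $\sum_i \nu_r^{(i)} = N$, with $c_N$, $D_N$, $\tau_N$ as defined below, and assume $\tau_N(u)<\infty$ for all $u\ge0$. Fix $t > 0$ and $l \in \mathbb{N}$. Then for any constant $B > 0$, $$\sum_{\substack{s_1,\dots,s_l=1\\\text{all distinct}}}^{\tau_N(t)}\prod_{j=1}^l\big[c_N(s_j) + BD_N(s_j)\big] \leq \sum_{\substack{s_1,\dots,s_l=1\\\text{all distinct}}}^{\tau_N(t)}\prod_{j=1}^l c_N(s_j) + \Bigg(\sum_{s=1}^{\tau_N(t)} D_N(s)\Bigg)(t+1)^{l-1}(1+B)^l.$$
   Context: $(x)_k$ is the falling factorial. $c_N(r) := \frac{1}{(N)_2}\sum_{i=1}^N(\nu_r^{(i)})_2$; $D_N(r) := \frac{1}{N(N)_2}\sum_{i=1}^N(\nu_r^{(i)})_2\{\nu_r^{(i)} + \frac1N\sum_{j\ne i}(\nu_r^{(j)})^2\}$; $\tau_N(u) := \inf\{s\in\{0,1,2,\dots\} : \sum_{r=1}^s c_N(r) \ge u\}$. *)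

(* Defs.v *)
From HB Require Import structures.
From mathcomp Require Import all_boot all_order all_algebra.
Set Implicit Arguments. Unset Strict Implicit. Unset Printing Implicit Defensive.
Import Order.TTheory GRing.Theory Num.Theory.
Local Open Scope ring_scope.

(* Family nu : generation r (r >= 1; index 0 unused) -> individual i in 'I_N -> count. *)

Definition ff2 (R : pzRingType) (x : nat) : R := x%:R * (x%:R - 1).

Definition cN (R : fieldType) (N : nat) (nu : nat -> 'I_N -> nat) (r : nat) : R :=
  (ff2 R N)^-1 * \sum_(i < N) ff2 R (nu r i).

Definition DN (R : fieldType) (N : nat) (nu : nat -> 'I_N -> nat) (r : nat) : R :=
  (N%:R * ff2 R N)^-1 *
  \sum_(i < N) ff2 R (nu r i) *
     ((nu r i)%:R + N%:R^-1 * \sum_(j < N | j != i) ((nu r j)%:R) ^+ 2).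

Definition csum (R : fieldType) (N : nat) (nu : nat -> 'I_N -> nat) (s : nat) : R :=
  \sum_(1 <= r < s.+1) cN R nu r.

Definition is_tauN (R : realFieldType) (N : nat) (nu : nat -> 'I_N -> nat)
    (u : R) (T : nat) : Prop :=
  u <= csum R nu T /\ forall s : nat, u <= csum R nu s -> (T <= s)%N.

(* Main.v *)
Require Import Defs.
From HB Require Import structures.
From mathcomp Require Import all_boot all_order all_algebra.
From mathcomp Require Import ring lra.
Import Order.TTheory GRing.Theory Num.Theory.
Local Open Scope ring_scope.

Section Aux.
Variable R : realFieldType.

Lemma ff2_ge0 (x : nat) : 0 <= ff2 R x.
Proof.
rewrite /ff2; case: x => [|x]; first by rewrite mulr0n mul0r.
by rewrite mulr_ge0 // -natr1 addrK.
Qed.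

Lemma ff2N_gt0 (N : nat) : (2 <= N)%N -> 0 < ff2 R N.
Proof.
case: N => [|[|N]] // _; rewrite /ff2 mulr_gt0 //.
by rewrite -natr1 addrK ltr0n.
Qed.

Lemma sq_sum (I : eqType) (r : seq I) (P : pred I) (F : I -> R) :
  (forall i, 0 <= F i) ->
  \sum_(i <- r | P i) F i ^+ 2 <= (\sum_(i <- r | P i) F i) ^+ 2.
Proof.
move=> F0; elim: r => [|x r IH]; first by rewrite !big_nil expr0n.
rewrite !big_cons; case: (P x) => //.
have S0 : 0 <= \sum_(i <- r | P i) F i by apply: sumr_ge0.
have := F0 x; nra.
Qed.

Lemma sum_sub_le (I : finType) (P : pred I) (G : I -> R) :
  (forall i, 0 <= G i) -> \sum_(i | P i) G i <= \sum_i G i.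
Proof. by move=> h; rewrite [X in _ <= X](bigID P) /= lerDl sumr_ge0. Qed.

Variable N : nat.
Variable nu : nat -> 'I_N -> nat.
Hypothesis HN : (2 <= N)%N.
Hypothesis Hsum : forall r : nat, (1 <= r)%N -> (\sum_(i < N) nu r i)%N = N.

Lemma cN_ge0 r : 0 <= cN R nu r.
Proof.
rewrite /cN mulr_ge0 //; first by rewrite invr_ge0 ltW // ff2N_gt0.
by apply: sumr_ge0 => i _; apply: ff2_ge0.
Qed.

Lemma DN_ge0 r : 0 <= DN R nu r.
Proof.
rewrite /DN mulr_ge0 //; first by rewrite invr_ge0 mulr_ge0 // ltW // ff2N_gt0.
apply: sumr_ge0 => i _; rewrite mulr_ge0 ?ff2_ge0 // addr_ge0 //.
rewrite mulr_ge0 ?invr_ge0 //; apply: sumr_ge0 => j _; exact: sqr_ge0.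
Qed.

Lemma sumR r : (1 <= r)%N -> \sum_(i < N) (nu r i)%:R = N%:R :> R.
Proof. by move=> h; rewrite -natr_sum Hsum. Qed.

Lemma cN_le1 r : (1 <= r)%N -> cN R nu r <= 1.
Proof.
move=> hr; have hf := ff2N_gt0 N HN.
rewrite /cN ler_pdivrMl // mulr1.
have -> : \sum_(i < N) ff2 R (nu r i)
   = \sum_(i < N) (nu r i)%:R ^+ 2 - \sum_(i < N) (nu r i)%:R.
  by rewrite -sumrB; apply: eq_bigr => i _; rewrite /ff2; ring.
rewrite sumR // /ff2.
have := @sq_sum _ (index_enum 'I_N) predT (fun i => (nu r i)%:R) (fun i => ler0n _ _).
rewrite sumR //; nra.
Qed.

Lemma DN_le_cN r : (1 <= r)%N -> DN R nu r <= cN R nu r.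
Proof.
move=> hr; have hf := ff2N_gt0 N HN.
have hN : 0 < N%:R :> R by rewrite ltr0n; case: N HN.
rewrite /DN /cN invfM -!mulrA ler_pdivrMl // mulrCA ler_wpM2l ?invr_ge0 ?(ltW hf) //.
rewrite mulr_sumr; apply: ler_sum => i _.
rewrite [X in _ <= X]mulrC ler_wpM2l ?ff2_ge0 //.
pose S : R := \sum_(j < N | j != i) (nu r j)%:R.
set Q := \sum_(j < N | j != i) (nu r j)%:R ^+ 2.
have eS : (nu r i)%:R + S = N%:R :> R.
  by rewrite -(sumR r hr) (bigD1 i) //=.
have S0 : 0 <= S by apply: sumr_ge0.
have QS : Q <= S ^+ 2 by apply: sq_sum.
have hQ : N%:R^-1 * Q <= S.
  rewrite ler_pdivrMl //; apply: (le_trans QS); rewrite expr2 ler_wpM2r //.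
  rewrite -eS lerDr //.
have := ler0n R (nu r i); lra.
Qed.

Lemma sum_le_t1 (t : R) T : 0 < t -> is_tauN nu t T ->
  \sum_(r < T) cN R nu r.+1 <= t + 1.
Proof.
case: T => [|T] Ht HT; first by rewrite big_ord0; lra.
rewrite big_ord_recr /=.
have h1 : \sum_(i < T) cN R nu (widen_ord (leqnSn T) i).+1 < t.
  rewrite real_ltNge ?num_real //; apply/negP => h.
  case: HT => _ /(_ T); rewrite /csum big_add1 /= big_mkord.
  by move=> /(_ h); rewrite ltnn.
have h2 : cN R nu (@ord_max T).+1 <= 1 by apply: cN_le1.
lra.
Qed.

End Aux.

Theorem lemma5 (R : realFieldType) (N : nat) (nu : nat -> 'I_N -> nat)
  (HN : (2 <= N)%N)
  (Hsum : forall r : nat, (1 <= r)%N -> (\sum_(i < N) nu r i)%N = N)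
  (Htau_fin : forall u : R, 0 <= u -> exists T : nat, is_tauN nu u T)
  (t : R) (l : nat) (T : nat) (B : R)
  (Ht : 0 < t) (HT : is_tauN nu t T) (HB : 0 < B) :
  \sum_(s : {ffun 'I_l -> 'I_T} | injectiveb s)
      \prod_(j < l) (cN R nu (s j).+1 + B * DN R nu (s j).+1)
  <= \sum_(s : {ffun 'I_l -> 'I_T} | injectiveb s)
      \prod_(j < l) cN R nu (s j).+1
     + (\sum_(1 <= r < T.+1) DN R nu r) * (t + 1) ^ (l%:Z - 1) * (1 + B) ^+ l.
Proof.
set a := fun r : 'I_T => cN R nu r.+1.
set b := fun r : 'I_T => B * DN R nu r.+1.
set Y := \sum_(r : 'I_T) a r.
set SD := \sum_(r : 'I_T) DN R nu r.+1.
set X := \sum_(r : 'I_T) (a r + b r).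
have eSD : \sum_(1 <= r < T.+1) DN R nu r = SD.
  by rewrite big_add1 /= big_mkord.
rewrite eSD -lerBlDl.
have step1 : \sum_(s : {ffun 'I_l -> 'I_T} | injectiveb s)
      \prod_(j < l) (a (s j) + b (s j))
  - \sum_(s : {ffun 'I_l -> 'I_T} | injectiveb s) \prod_(j < l) a (s j)
  <= X ^+ l - Y ^+ l.
  rewrite -sumrB.
  have -> : X ^+ l - Y ^+ l = \sum_(s : {ffun 'I_l -> 'I_T})
      (\prod_(j < l) (a (s j) + b (s j)) - \prod_(j < l) a (s j)).
    have pc : forall x : R, x ^+ l = \prod_(j < l) x.
      by move=> x; rewrite prodr_const card_ord.
    rewrite sumrB !pc.
    by rewrite !bigA_distr_bigA.
  apply: sum_sub_le => s; rewrite subr_ge0; apply: ler_prod => j _.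
  rewrite cN_ge0 // lerDl; apply: mulr_ge0; [exact: ltW | exact: DN_ge0].
apply: (le_trans step1) => {step1}.
have Y0 : 0 <= Y by apply: sumr_ge0 => r _; apply: cN_ge0.
have SD0 : 0 <= SD by apply: sumr_ge0 => r _; apply: DN_ge0.
have SDY : SD <= Y by apply: ler_sum => r _; apply: DN_le_cN.
have eX : X = Y + B * SD by rewrite /X big_split /= mulr_sumr.
have Yt : Y <= t + 1 by apply: sum_le_t1.
case: l => [|n].
  rewrite !expr0 subrr; apply: mulr_ge0; [apply: mulr_ge0 => //; apply: exprz_ge0; lra | lra].
have -> : (n.+1%:Z - 1 = n%:Z)%R by rewrite -addn1 PoszD addrK.
rewrite subrXX /=.
have -> : X - Y = B * SD by rewrite eX; ring.
have key : \sum_(i < n.+1) X ^+ (n - i) * Y ^+ i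
   <= (t + 1) ^+ n * \sum_(i < n.+1) (1 + B) ^+ (n - i) * 1 ^+ i.
  rewrite mulr_sumr; apply: ler_sum => i _.
  have hi : (i <= n)%N by rewrite -ltnS.
  rewrite expr1n mulr1.
  have Xb : X <= (1 + B) * (t + 1) by rewrite eX; nra.
  have X0 : 0 <= X by rewrite eX; nra.
  apply: (le_trans (y := ((1 + B) * (t + 1)) ^+ (n - i) * (t + 1) ^+ i)).
    apply: ler_pM; rewrite ?exprn_ge0 //; apply: lerXn2r; rewrite ?nnegrE //; lra.
  rewrite exprMn -mulrA -exprD subnK // mulrC; done.
have hB : (1 + B) ^+ n.+1 - 1 ^+ n.+1 = B * \sum_(i < n.+1) (1 + B) ^+ (n - i) * 1 ^+ i.
  by rewrite subrXX /=; congr (_ * _); ring.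
apply: (le_trans (y := B * SD * ((t + 1) ^+ n * \sum_(i < n.+1) (1 + B) ^+ (n - i) * 1 ^+ i))).
  by rewrite ler_wpM2l // mulr_ge0 // ltW.
have -> : B * SD * ((t + 1) ^+ n * \sum_(i < n.+1) (1 + B) ^+ (n - i) * 1 ^+ i)
  = SD * (t + 1) ^+ n * ((1 + B) ^+ n.+1 - 1 ^+ n.+1) by rewrite hB; ring.
have t1 : 0 <= t + 1 by lra.
change ((t + 1) ^ n%:Z) with ((t + 1) ^+ n).
rewrite ler_wpM2l ?mulr_ge0 ?exprn_ge0 //.
rewrite expr1n lerBlDr lerDl //.
Qed.
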